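(* Let $(V,c)$ be a network satisfying the Yang-type inequality with constant $C_{YT}$. Then for any finite subset $\Omega\subset V$ with $|\Omega|\ge2$ and Dirichlet eigenvalues $\lambda_1\le\lambda_2\le\cdots$, $$\lambda_2-\lambda_{\min}\le\Big(\frac{C_{YT}}{1-\lambda_1}+1\Big)(\lambda_1-\lambda_{\min}).$$
   Context: A network is a pair $(V,c)$ with $V$ countable and $c:V\times V\to[0,\infty)$ symmetric with $\pi(x)=\sum_yc(x,y)<\infty$; $P(x,y)=c(x,y)/\pi(x)$ and $\Delta f(x)=\sum_yP(x,y)(f(x)-f(y))$, a bounded self-adjoint operator on $L^2(V,\pi)$ (inner product $\sum_x\pi(x)f(x)\overline{g(x)}$) with spectrum in $[0,2]$; $\lambda_{\min}$ is the bottom of its spectrum. For finite $\Omega\subset V$, the Dirichlet eigenvalues $\lambda_1\le\cdots\le\lambda_{|\Omega|}$ of $\Omega$ are the eigenvalues (with multiplicity) of the compression $\Delta_\Omega f=\mathbf 1_\Omega\cdot\Delta f$ on functions vanishing outside $\Omega$. The network satisfies the Yang-type inequality with constant $C_{YT}$ if for every finite $\Omega\subset V$ and every $k<|\Omega|$: $\sum_{i=1}^k(\lambda_{k+1}-\lambda_i)^2(1-\lambda_i)\le C_{YT}\sum_{i=1}^k(\lambda_{k+1}-\lambda_i)(\lambda_i-\lambda_{\min})$. *)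

(* Defs.v *)
From HB Require Import structures.
From mathcomp Require Import all_boot all_order all_algebra.
From mathcomp Require Import finmap.
From mathcomp Require Import all_classical all_reals all_analysis.
Set Implicit Arguments. Unset Strict Implicit. Unset Printing Implicit Defensive.
Import Order.TTheory GRing.Theory Num.Theory.
Local Open Scope classical_set_scope.
Local Open Scope ring_scope.

Section Network.
Variables (R : realType) (V : countType).
Implicit Types (c : V -> V -> R) (F f : V -> R).

(** A network (V,c): c symmetric, nonnegative, with pi(x) = sum_y c(x,y) finite
    (and positive, so that P = c/pi is defined). *)
Definition is_network c : Prop :=
  [/\ (forall x y, 0 <= c x y), (forall x y, c x y = c y x)
    & (forall x, (0 < \esum_(y in [set: V]) (c x y)%:E)%E /\
                 (\esum_(y in [set: V]) (c x y)%:E < +oo)%E)].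

Definition pi c (x : V) : R := fine (\esum_(y in [set: V]) (c x y)%:E).

Definition Ptr c (x y : V) : R := c x y / pi c x.

Definition csum F : R :=
  fine (\esum_(y in [set: V]) (Num.max (F y) 0)%:E)
  - fine (\esum_(y in [set: V]) (Num.max (- F y) 0)%:E).

Definition in_L2 c f : Prop :=
  (\esum_(x in [set: V]) (pi c x * f x ^+ 2)%:E < +oo)%E.

Definition L2norm2 c f : R := fine (\esum_(x in [set: V]) (pi c x * f x ^+ 2)%:E).

Definition Lap c f (x : V) : R := csum (fun y => Ptr c x y * (f x - f y)).

Definition Lap_form c f : R := csum (fun x => pi c x * Lap c f x * f x).

(** bottom of the spectrum of the bounded self-adjoint operator Delta on
    L^2(V,pi): infimum of its numerical range (Rayleigh quotients). *)
Definition lambda_min c : R :=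
  inf [set Lap_form c f / L2norm2 c f | f in [set f | in_L2 c f /\ L2norm2 c f != 0]].

(** matrix of the compression Delta_Omega = 1_Omega . Delta on functions vanishing
    outside the finite set Omega, in the basis of indicators of the points of Omega
    (entries: Delta 1_{y}(x) = [x = y] - P(x,y), since sum_z P(x,z) = 1). *)
Definition dirichlet_mx c (Om : {fset V}) : 'M[R]_(size (Om : seq V)) :=
  \matrix_(i, j) ((i == j)%:R - Ptr c (tnth (in_tuple (Om : seq V)) i)
                                      (tnth (in_tuple (Om : seq V)) j)).

Definition dirichlet_spectrum c (Om : {fset V}) (s : seq R) : Prop :=
  [/\ size s = size (Om : seq V), sorted <=%R s
    & char_poly (dirichlet_mx c Om) = \prod_(l <- s) ('X - l%:P)].

(** Yang-type inequality with constant C: for every finite Om and every k < |Om|,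
    sum_{i=1}^k (l_{k+1}-l_i)^2 (1-l_i) <= C sum_{i=1}^k (l_{k+1}-l_i)(l_i - lmin).
    (0-based: s`_k = lambda_{k+1}, s`_i = lambda_{i+1}.) *)
Definition yang_type c (C : R) : Prop :=
  forall (Om : {fset V}) (s : seq R), dirichlet_spectrum c Om s ->
  forall k : nat, (k < size (Om : seq V))%N ->
    \sum_(i < k) (s`_k - s`_i) ^+ 2 * (1 - s`_i)
      <= C * \sum_(i < k) (s`_k - s`_i) * (s`_i - lambda_min c).

End Network.

(* Main.v *)
Require Import Defs.
From HB Require Import structures.
From mathcomp Require Import all_boot all_order all_algebra.
From mathcomp Require Import finmap.
From mathcomp Require Import all_classical all_reals all_analysis.
From mathcomp Require Import ring lra.
Import Order.TTheory GRing.Theory Num.Theory.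
Local Open Scope ring_scope.
Lemma esumZ_pos (R : realType) (T : choiceType) (S : set T) (a : T -> \bar R) (r : R) :
  0 < r -> (forall i, (0 <= a i)%E) ->
  \esum_(i in S) (r%:E * a i)%E = (r%:E * \esum_(i in S) a i)%E.
Proof.
move=> r0 a0; rewrite /esum -ereal_sup_pZl //; congr ereal_sup.
apply/seteqP; split => y /=.
- case=> A hA <-; exists (\sum_(i \in A) a i)%R; first by exists A.
  by rewrite ge0_mule_fsumr.
- case=> _ [A hA <-] <-; exists A => //; by rewrite ge0_mule_fsumr.
Qed.

Lemma esum_pt (R : realType) (T : choiceType) (F : T -> R) (x : T) :
  (forall z, z != x -> F z = 0) -> 0 <= F x ->
  \esum_(z in [set: T]) (F z)%:E = (F x)%:E.
Proof.
move=> HF Fx.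
rewrite (esumID [set x]); last first.
  by move=> i _; case: (eqVneq i x) => [->|/HF ->]; rewrite lee_fin.
rewrite setTI esum_set1 ?lee_fin // esum1 ?adde0 //.
move=> i [_ /= hi]; rewrite HF //; exact/eqP.
Qed.

Lemma csum_pt (R : realType) (V : countType) (F : V -> R) (x : V) :
  (forall z, z != x -> F z = 0) -> csum F = F x.
Proof.
move=> HF; rewrite /csum (@esum_pt _ _ (fun y => Num.max (F y) 0) x); last first.
- by rewrite le_max lexx orbT.
- by move=> z /HF ->; rewrite maxxx.
rewrite (@esum_pt _ _ (fun y => Num.max (- F y) 0) x); last first.
- by rewrite le_max lexx orbT.
- by move=> z /HF ->; rewrite oppr0 maxxx.
rewrite /=; case: (leP 0 (F x)) => h.
- by rewrite (max_idPr _) ?subr0 // oppr_le0.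
- by rewrite (max_idPl _) ?sub0r ?opprK // oppr_ge0 ltW.
Qed.
Section Net.
Variables (R : realType) (V : countType) (c : V -> V -> R).
Hypothesis Hn : is_network c.

Lemma pi_gt0 x : 0 < Defs.pi c x.
Proof.
case: Hn => _ _ /(_ x) [h1 h2]; rewrite /pi; apply: fine_gt0; by rewrite h1 h2.
Qed.

Definition rest x := \esum_(y in [set: V] `&` ~` [set x]) (c x y)%:E.

Lemma rest_fin x : rest x \is a fin_num /\ Defs.pi c x = c x x + fine (rest x).
Proof.
case: Hn => c0 _ /(_ x) [h1 h2].
set S0 := (X in (X < +oo)%E) in h2.
have E : (S0 = (c x x)%:E + rest x)%E.
  rewrite /S0 (esumID [set x]); last by move=> i _; rewrite lee_fin.
  by rewrite setTI esum_set1 ?lee_fin.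
have r0 : (0 <= rest x)%E by apply: esum_ge0 => i _; rewrite lee_fin.
have rf : rest x \is a fin_num.
  rewrite ge0_fin_numE //; apply: le_lt_trans h2; rewrite E.
  by rewrite leeDr ?lee_fin.
split => //; rewrite /Defs.pi -/S0 E fineD //.
Qed.

Lemma Pxx_bounds x : 0 <= Ptr c x x <= 1.
Proof.
have p0 := pi_gt0 x; case: (rest_fin x) => rf pe.
case: Hn => c0 _ _.
have r0 : 0 <= fine (rest x).
  by apply: fine_ge0; apply: esum_ge0 => i _; rewrite lee_fin.
rewrite /Ptr divr_ge0 ?c0 ?(ltW p0) //= ler_pdivrMr // mul1r pe.
by rewrite lerDl.
Qed.

Definition ind x : V -> R := fun z => (z == x)%:R.

Lemma Lap_ind x : Lap c (ind x) x = 1 - Ptr c x x.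
Proof.
have p0 := pi_gt0 x; case: (rest_fin x) => rf pe.
case: Hn => c0 _ _.
rewrite /Lap /csum /ind eqxx.
have g0 y : 0 <= Ptr c x y * (1 - (y == x)%:R).
  by rewrite mulr_ge0 ?divr_ge0 ?c0 ?(ltW p0) // subr_ge0; case: (y == x).
rewrite (@esum1 _ _ _ (fun y => (Num.max (- (Ptr c x y * (1 - (y == x)%:R))) 0)%:E)); last first.
  by move=> i _; rewrite (max_idPr _) // oppr_le0.
rewrite subr0.
rewrite (eq_esum (b := fun y => ((Defs.pi c x)^-1%:E * (c x y * (1 - (y == x)%:R))%:E)%E)); last first.
  by move=> i _; rewrite (max_idPl (g0 i)) /Ptr -EFinM mulrA [_^-1 * _]mulrC.
rewrite esumZ_pos ?invr_gt0 //; last first.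
  by move=> i; rewrite lee_fin mulr_ge0 ?c0 // subr_ge0; case: (i == x).
rewrite (esumID [set x]); last first.
  by move=> i _; rewrite lee_fin mulr_ge0 ?c0 // subr_ge0; case: (i == x).
rewrite setTI esum_set1 ?eqxx ?subrr ?mulr0 ?lee_fin // add0e.
rewrite (eq_esum (b := fun y => (c x y)%:E)); last first.
  move=> i [_ /= hi]; have /negbTE -> : i != x by exact/eqP.
  by rewrite subr0 mulr1.
rewrite -/(rest x) fineM //= pe /Ptr.
have pn : Defs.pi c x != 0 by rewrite gt_eqF.
rewrite pe in pn *; field; exact: pn.
Qed.

End Net.
Arguments ind {R V}.
Section Net2.
Variables (R : realType) (V : countType) (c : V -> V -> R).
Hypothesis Hn : is_network c.

Lemma lmin_le x : lambda_min c <= 1 - Ptr c x x.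
Proof.
have p0 := @pi_gt0 _ _ _ Hn x.
have Hb := @Pxx_bounds _ _ _ Hn x.
have HL := @Lap_ind _ _ _ Hn x.
have L2 : L2norm2 c (ind x) = Defs.pi c x.
  rewrite /L2norm2 (@esum_pt _ _ (fun z => Defs.pi c z * ind x z ^+ 2) x) /=.
  - by rewrite /ind eqxx expr1n mulr1.
  - by move=> z hz; rewrite /ind (negbTE hz) expr0n mulr0.
  - by rewrite /ind eqxx expr1n mulr1 ltW.
have LF : Lap_form c (ind x) = Defs.pi c x * (1 - Ptr c x x).
  rewrite /Lap_form (@csum_pt _ _ _ x) ?HL /ind ?eqxx ?mulr1 //.
  by move=> z hz; rewrite (negbTE hz) mulr0.
rewrite /lambda_min.
set S := (X in inf X).
have HS : S (1 - Ptr c x x).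
  exists (ind x).
    split; last by rewrite L2 gt_eqF.
    rewrite /in_L2 (@esum_pt _ _ (fun z => Defs.pi c z * ind x z ^+ 2) x) ?ltry //.
    - by move=> z hz; rewrite /ind (negbTE hz) expr0n mulr0.
    - by rewrite /ind eqxx expr1n mulr1 ltW.
  by rewrite LF L2 mulrAC mulfV ?mul1r // gt_eqF.
case: (pselect (has_lbound S)) => hl.
- have hi : has_inf S by split => //; exists (1 - Ptr c x x).
  have := sup_upper_bound (proj2 (has_inf_supN S) hi).
  move/(_ (- (1 - Ptr c x x))) => h.
  rewrite /inf lerNl; apply: h; by exists (1 - Ptr c x x).
- rewrite inf_out; first by rewrite subr_ge0; case/andP: Hb.
  by case.
Qed.

End Net2.
Lemma trace_spec (R : realType) (V : countType) (c : V -> V -> R)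
  (Om : {fset V}) (s : seq R) :
  dirichlet_spectrum c Om s -> (0 < size (Om : seq V))%N ->
  \sum_(i < size (Om : seq V)) s`_i =
  \sum_(i < size (Om : seq V)) (1 - Ptr c (tnth (in_tuple (Om : seq V)) i)
                                          (tnth (in_tuple (Om : seq V)) i)).
Proof.
case=> hs _ hc hpos.
have := char_poly_trace (dirichlet_mx c Om) hpos.
rewrite hc -{1}hs coefPn_prod_XsubC; last by rewrite hs -lt0n.
move/oppr_inj; rewrite (big_nth 0) big_mkord hs => ->.
by rewrite /mxtrace; apply: eq_bigr => i _; rewrite mxE eqxx.
Qed.

Theorem corollary5p1 (R : realType) (V : countType) (c : V -> V -> R) (C_YT : R) :
  is_network c -> 0 <= C_YT -> yang_type c C_YT ->
  forall (Om : {fset V}) (s : seq R),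
    (2 <= size (Om : seq V))%N -> dirichlet_spectrum c Om s ->
    s`_1 - lambda_min c <= (C_YT / (1 - s`_0) + 1) * (s`_0 - lambda_min c).
Proof.
move=> Hn C0 Hy Om s h2 Hs.
have Hs' := Hs; case: Hs' => hsz hsort _.
set n := size (Om : seq V) in h2 hsz *.
set lm := lambda_min c.
have h0 : (0 < n)%N by apply: leq_trans h2.
have le0i i : (i < n)%N -> s`_0 <= s`_i.
  by move=> hi; apply: (le_sorted_leq_nth 0 hsort) => //; rewrite inE /= hsz.
have s01 : s`_0 <= s`_1 by apply: le0i.
set d := fun i : 'I_n => 1 - Ptr c (tnth (in_tuple (Om : seq V)) i)
                                  (tnth (in_tuple (Om : seq V)) i).
have tr : \sum_(i < n) s`_i = \sum_(i < n) d i by exact: trace_spec.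
have d01 i : 0 <= d i <= 1.
  have /andP[h1 h3] := @Pxx_bounds _ _ _ Hn (tnth (in_tuple (Om : seq V)) i).
  by rewrite /d subr_ge0 h3 /= gerBl.
have lmd i : lm <= d i by apply: lmin_le.
have sum_le : \sum_(i < n) s`_i <= n%:R.
  rewrite tr; apply: le_trans (_ : \sum_(i < n) (1 : R) <= _).
    by apply: ler_sum => i _; case/andP: (d01 i).
  by rewrite sumr_const card_ord.
have sum_ge : n%:R * s`_0 + (s`_1 - s`_0) <= \sum_(i < n) s`_i.
  have -> : \sum_(i < n) s`_i = \sum_(i < n) (s`_0 + (s`_i - s`_0)).
    by apply: eq_bigr => i _; rewrite addrC subrK.
  rewrite big_split /= sumr_const card_ord mulr_natl lerD2l.
  rewrite (bigD1 (Ordinal h2)) //= lerDl; apply: sumr_ge0 => i _.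
  by rewrite subr_ge0 le0i.
have hy1 := Hy Om s Hs 1%N h2.
rewrite !big_ord1 /= in hy1.
have nR : (0 : R) < n%:R by rewrite ltr0n.
have s0le1 : s`_0 <= 1.
  have : n%:R * s`_0 <= n%:R * 1 by rewrite mulr1; lra.
  by rewrite ler_pM2l.
case: (eqVneq (s`_0) 1) => [e1|ne1].
  have e2 : s`_1 = 1 by rewrite e1 in sum_ge s01; lra.
  by rewrite e1 e2 subrr invr0 mulr0 add0r mul1r.
have q0 : 0 < 1 - s`_0 by rewrite subr_gt0 lt_neqAle ne1 s0le1.
have blm : lm <= s`_0.
  case: (boolP (has (fun v => s`_0 < v) s)) => hh.
  - set k := find (fun v => s`_0 < v) s.
    have hk : (k < n)%N by rewrite -hsz -has_find.
    have sk : s`_0 < s`_k := nth_find 0 hh.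
    have bf i : (i < k)%N -> s`_i = s`_0.
      move=> hi; have := before_find 0 hi => /negbT; rewrite -leNgt => h.
      apply/eqP; rewrite eq_le h le0i //; exact: ltn_trans hi hk.
    have k0 : (0 < k)%N.
      by rewrite lt0n; apply/negP => /eqP k0; rewrite k0 ltxx in sk.
    have := Hy Om s Hs k hk.
    rewrite (eq_bigr (fun _ => (s`_k - s`_0) ^+ 2 * (1 - s`_0))); last first.
      by move=> i _; rewrite (bf i).
    rewrite [X in _ <= _ * X](eq_bigr (fun _ => (s`_k - s`_0) * (s`_0 - lm))); last first.
      by move=> i _; rewrite (bf i).
    rewrite !sumr_const card_ord -(mulr_natl ((s`_k - s`_0) ^+ 2 * (1 - s`_0))).
    rewrite -(mulr_natl ((s`_k - s`_0) * (s`_0 - lm))) => hyk.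
    have kR : (0 : R) < k%:R by rewrite ltr0n.
    rewrite leNgt; apply/negP => hlt.
    have a0 : 0 < s`_k - s`_0 by rewrite subr_gt0.
    have Y0 : (s`_k - s`_0) * (s`_0 - lm) < 0 by rewrite pmulr_rlt0 // subr_lt0.
    have X0 : 0 < (s`_k - s`_0) ^+ 2 * (1 - s`_0) by rewrite mulr_gt0 // exprn_gt0.
    have h1 : C_YT * (k%:R * ((s`_k - s`_0) * (s`_0 - lm))) <= 0.
      by rewrite mulr_ge0_le0 // pmulr_rle0 // ltW.
    have h3 : 0 < k%:R * ((s`_k - s`_0) ^+ 2 * (1 - s`_0)) by rewrite mulr_gt0.
    lra.
  - have allq i : (i < n)%N -> s`_i = s`_0.
      move=> hi; apply/eqP; rewrite eq_le le0i // andbT.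
      rewrite leNgt; apply/negP => hlt; move/negP: hh; apply.
      apply/hasP; exists s`_i => //; apply: mem_nth; by rewrite hsz.
    case: (pselect (exists j, d j <= s`_0)) => [[j hj]|nj].
      exact: le_trans (lmd j) hj.
    exfalso.
    have : \sum_(i < n) (s`_0 : R) < \sum_(i < n) d i.
      apply: ltr_sum.
        by apply/hasP; exists (Ordinal h0); rewrite ?mem_index_enum.
      move=> i _; rewrite ltNge; apply/negP => hi; apply: nj; by exists i.
    rewrite -tr (eq_bigr (fun i : 'I_n => s`_i)) ?ltxx //.
    by move=> i _; rewrite allq.
set a := s`_1 - s`_0 in hy1 *.
set b := s`_0 - lm.
set q := 1 - s`_0 in hy1 q0 *.
have a0 : 0 <= a by rewrite subr_ge0.
have b0 : 0 <= b by rewrite subr_ge0.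
have aq : a * q <= C_YT * b.
  case: (eqVneq a 0) => [->|an0]; first by rewrite mul0r mulr_ge0.
  have ap : 0 < a by rewrite lt_neqAle eq_sym an0 a0.
  have : a * (a * q) <= a * (C_YT * b).
    by rewrite mulrA -expr2 mulrCA.
  by rewrite ler_pM2l.
have -> : s`_1 - lm = a + b by rewrite /a /b; ring.
by rewrite mulrDl mul1r lerD2r mulrAC ler_pdivlMr // mulrC.
Qed.
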